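(* Let $L$ be a subspace of $\mathbb{C}^n$ and suppose that $L$ is the (vector space) direct sum of subspaces $L_1,\dots,L_p$. For each $i$ let $F_i$ be the face of the state space $K_n$ of $\mathcal{B}(\mathbb{C}^n)$ associated with $L_i$. Then the convex hull of $F_1,\dots,F_p$ is the direct convex sum of $F_1,\dots,F_p$. In particular, if $x_1,\dots,x_p$ are linearly independent unit vectors in $\mathbb{C}^n$, then the vector states $\omega_{x_1},\dots,\omega_{x_p}$ are linearly independent (over $\mathbb{R}$) and their convex hull is a simplex.
   Context: For a unit vector $x\in\mathbb{C}^n$, $\omega_x$ denotes the vector state $\omega_x(A)=(Ax,x)$ on $\mathcal{B}(\mathbb{C}^n)$; $K_n$ denotes the convex set of states on $\mathcal{B}(\mathbb{C}^n)$. The face of $K_n$ associated with a subspace $M\subseteq\mathbb{C}^n$ (with orthogonal projection $Q$ onto $M$) is $F_Q=\{\omega\in K_n:\omega(Q)=1\}$; it is the convex hull of the vector states $\omega_x$ with $x\in M$ a unit vector. A convex set $C$ is the direct convex sum of convex subsets $C_1,\dots,C_p$ if each $\omega\in C$ can be written uniquely as $\omega=\sum_{i\in I}\lambda_i\omega_i$ with $I\subseteq\{1,\dots,p\}$, $\lambda_i>0$, $\sum_{i\in I}\lambda_i=1$, $\omega_i\in C_i$. A finite-dimensional convex set is a simplex if it is the direct convex sum of finitely many points. *)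

(* Defs.v *)
(* The complex field is abstracted as an arbitrary
   numClosedFieldType C (e.g. algC). *)
From HB Require Import structures.
From mathcomp Require Import all_boot all_order all_algebra.
Set Implicit Arguments. Unset Strict Implicit. Unset Printing Implicit Defensive.
Import Order.TTheory GRing.Theory Num.Theory.
Local Open Scope ring_scope.

(* Linear functionals on B(C^n) = 'M[C]_n.  Matrices act on column vectors;
   vectors of C^n are represented as row vectors x : 'rV_n, acting via x^T. *)
Definition functional (C : numClosedFieldType) (n : nat) := 'M[C]_n -> C.

Definition adjmx (C : numClosedFieldType) (m k : nat) (B : 'M[C]_(m, k)) : 'M[C]_(k, m) :=
  map_mx (@Num.conj C) B^T.

Definition is_state (C : numClosedFieldType) (n : nat) (w : functional C n) : Prop :=
  (forall (a : C) (A B : 'M[C]_n), w (a *: A + B) = a * w A + w B) /\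
  (forall B : 'M[C]_n, 0 <= w (adjmx B *m B)) /\
  w 1%:M = 1.

Definition vstate (C : numClosedFieldType) (n : nat) (x : 'rV[C]_n) : functional C n :=
  fun A => (map_mx (@Num.conj C) x *m A *m x^T) 0 0.

Definition unit_vector (C : numClosedFieldType) (n : nat) (x : 'rV[C]_n) : Prop :=
  (map_mx (@Num.conj C) x *m x^T) 0 0 = 1.

(* Q is the orthogonal projection onto the subspace M (row space of M) *)
Definition is_orth_proj (C : numClosedFieldType) (n : nat) (Q M : 'M[C]_n) : Prop :=
  adjmx Q = Q /\ Q *m Q = Q /\
  (forall x : 'rV[C]_n, (Q *m x^T == x^T) = (x <= M)%MS).

Definition face (C : numClosedFieldType) (n : nat) (M : 'M[C]_n) (w : functional C n) : Prop :=
  is_state w /\ exists Q : 'M[C]_n, is_orth_proj Q M /\ w Q = 1.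

Definition conv_hull (C : numClosedFieldType) (n p : nat)
  (Cs : 'I_p -> functional C n -> Prop) (w : functional C n) : Prop :=
  exists (m : nat) (mu : 'I_m -> C) (nu : 'I_m -> functional C n),
    (forall k, 0 <= mu k) /\ \sum_(k < m) mu k = 1 /\
    (forall k, exists i, Cs i (nu k)) /\
    (forall A, w A = \sum_(k < m) mu k * nu k A).

Definition convex_rep (C : numClosedFieldType) (n p : nat)
  (Cs : 'I_p -> functional C n -> Prop) (I : {set 'I_p}) (lam : 'I_p -> C)
  (ws : 'I_p -> functional C n) (w : functional C n) : Prop :=
  (forall i, i \in I -> 0 < lam i /\ Cs i (ws i)) /\
  \sum_(i in I) lam i = 1 /\
  (forall A, w A = \sum_(i in I) lam i * ws i A).

Definition direct_convex_sum (C : numClosedFieldType) (n p : nat)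
  (S : functional C n -> Prop) (Cs : 'I_p -> functional C n -> Prop) : Prop :=
  (forall I lam ws w, convex_rep Cs I lam ws w -> S w) /\
  (forall w, S w ->
     (exists I lam ws, convex_rep Cs I lam ws w) /\
     (forall I lam ws I' lam' ws',
        convex_rep Cs I lam ws w -> convex_rep Cs I' lam' ws' w ->
        I = I' /\ forall i, i \in I -> lam i = lam' i /\ forall A, ws i A = ws' i A)).

Definition simplex (C : numClosedFieldType) (n : nat) (S : functional C n -> Prop) : Prop :=
  exists (m : nat) (pts : 'I_m -> functional C n),
    direct_convex_sum S (fun i w => forall A, w A = pts i A).

(* Main.v *)
Require Import Defs.
From HB Require Import structures.
From Stdlib Require Import ClassicalEpsilon.
From mathcomp Require Import all_boot all_order all_algebra.
Set Implicit Arguments. Unset Strict Implicit. Unset Printing Implicit Defensive.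
Import Order.TTheory GRing.Theory Num.Theory.
Local Open Scope ring_scope.

Section S.
Variable C : numClosedFieldType.

Lemma adjmxM m k l (A : 'M[C]_(m,k)) (B : 'M[C]_(k,l)) :
  adjmx (A *m B) = adjmx B *m adjmx A.
Proof. by rewrite /adjmx trmx_mul map_mxM. Qed.

Lemma adjmxK m k (A : 'M[C]_(m,k)) : adjmx (adjmx A) = A.
Proof. by apply/matrixP=> i j; rewrite !mxE conjCK. Qed.

Lemma adjmxD m k (A B : 'M[C]_(m,k)) : adjmx (A + B) = adjmx A + adjmx B.
Proof. by apply/matrixP=> i j; rewrite !mxE rmorphD. Qed.

Lemma adjmxN m k (A : 'M[C]_(m,k)) : adjmx (- A) = - adjmx A.
Proof. by apply/matrixP=> i j; rewrite !mxE rmorphN. Qed.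

Lemma adjmxZ m k a (A : 'M[C]_(m,k)) : adjmx (a *: A) = a^* *: adjmx A.
Proof. by apply/matrixP=> i j; rewrite !mxE rmorphM. Qed.

Lemma adjmx1 k : adjmx (1%:M : 'M[C]_k) = 1%:M.
Proof. apply/matrixP=> i j; rewrite !mxE; case: eqP=> [->|ne]; case: eqP=> /=; try congruence; by rewrite ?rmorph1 ?rmorph0 ?mulr1n ?mulr0n. Qed.

Lemma adjmx0 m k : adjmx (0 : 'M[C]_(m,k)) = 0.
Proof. by apply/matrixP=> i j; rewrite !mxE rmorph0. Qed.

Lemma cols_eq m k l (A : 'M[C]_(m,k)) (B : 'M[C]_(k,l)) (D : 'M[C]_(m,l)) :
  (forall j, A *m col j B = col j D) -> A *m B = D.
Proof.
move=> H; apply/matrixP=> i j; have := congr1 (fun M : 'M[C]_(m,1) => M i 0) (H j).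
rewrite !mxE; under eq_bigr do rewrite mxE; done.
Qed.

Lemma quad0 (r c : C) : 0 <= c ->
  (forall s, s \is Num.real -> 0 <= s * r + s * s * c) -> r = 0.
Proof.
move=> c0 H.
have rr : r \is Num.real.
  have := H 1 (rpred1 _); rewrite !mul1r => h.
  have -> : r = (r + c) - c by rewrite addrK.
  by apply: rpredB; apply: ger0_real.
set d := c + 1.
have d0 : 0 < d by rewrite /d; apply: ltr_wpDl.
have dr : d \is Num.real by apply: gtr0_real.
set u := r / d.
have ur : u \is Num.real by apply: rpredM => //; rewrite realV.
have ru : r = u * d by rewrite /u divfK // gt_eqF.
have := H (- u); rewrite realN ur => /(_ isT).
have -> : - u * r + - u * - u * c = - (u * u).
  rewrite ru mulNr mulrNN /d mulrA mulrDr mulr1 opprD addrAC addNr add0r.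
  done.
rewrite oppr_ge0 => h.
have : u * u == 0.
  by rewrite eq_le h /= -expr2 -realEsqr.
rewrite mulf_eq0 orbb => /eqP u0.
by rewrite ru u0 mul0r.
Qed.

Lemma quadC (a b c : C) : 0 <= c ->
  (forall t, 0 <= t * b + t^* * a + t^* * t * c) -> a = 0 /\ b = 0.
Proof.
move=> c0 H.
have h1 : a + b = 0.
  apply: (quad0 c0) => s sr; have := H s.
  by rewrite conj_Creal // (addrC (s * b)) -mulrDr.
have h2 : 'i * (b - a) = 0.
  apply: (quad0 c0) => s sr; have := H ('i * s).
  rewrite rmorphM /= conjCi conj_Creal //.
  have -> : - 'i * s * ('i * s) = s * s.
    by rewrite mulrACA mulNr -expr2 sqrCi opprK mul1r.
  by rewrite !mulNr -mulrBr (mulrC 'i) -!mulrA.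
have : b - a = 0.
  by move: h2 => /eqP; rewrite mulf_eq0 (negbTE (neq0Ci _)) /= => /eqP.
move/eqP; rewrite subr_eq0 => /eqP ba.
by move: h1; rewrite ba -mulr2n => /eqP; rewrite mulrn_eq0 /= => /eqP ->.
Qed.

Definition lin n (w : functional C n) :=
  forall (a : C) (A B : 'M[C]_n), w (a *: A + B) = a * w A + w B.

Section Lin.
Variables (n : nat) (w : functional C n) (hw : lin w).
Lemma wD A B : w (A + B) = w A + w B.
Proof. by rewrite -{1}(scale1r A) hw mul1r. Qed.
Lemma w0 : w 0 = 0.
Proof. have h := wD 0 0; rewrite addr0 in h. by apply: (addrI (w 0)); rewrite -h addr0. Qed.
Lemma wZ a A : w (a *: A) = a * w A.
Proof. by rewrite -(addr0 (a *: A)) hw w0 addr0. Qed.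
Lemma wN A : w (- A) = - w A.
Proof. by rewrite -scaleN1r wZ mulN1r. Qed.
Lemma wB A B : w (A - B) = w A - w B.
Proof. by rewrite wD wN. Qed.
Lemma wsum m (F : 'I_m -> 'M[C]_n) : w (\sum_(k < m) F k) = \sum_(k < m) w (F k).
Proof.
elim/big_rec2: _; first exact: w0.
by move=> k y1 y2 _ <-; rewrite wD.
Qed.
End Lin.

Lemma kill n (w : functional C n) (P : 'M[C]_n) : lin w ->
  (forall B : 'M[C]_n, 0 <= w (adjmx B *m B)) -> w (adjmx P *m P) = 0 ->
  forall B : 'M[C]_n, w (adjmx B *m P) = 0 /\ w (adjmx P *m B) = 0.
Proof.
move=> hw pos h0 B; apply: (quadC (c := w (adjmx B *m B : 'M_n))) => // t.
have := pos (P + t *: B).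
rewrite adjmxD adjmxZ mulmxDl mulmxDr mulmxDr -!scalemxAl -!scalemxAr scalerA.
rewrite !(wD hw) !(wZ hw) h0 add0r.
by rewrite addrA (mulrC t^*).
Qed.

Lemma state_proj n (w : functional C n) (Q : 'M[C]_n) : is_state w ->
  adjmx Q = Q -> Q *m Q = Q -> w Q = 1 -> forall A, w A = w (Q *m A *m Q).
Proof.
move=> [hw [pos w1]] aQ QQ wQ A.
set P := 1%:M - Q.
have aP : adjmx P = P by rewrite /P adjmxD adjmxN adjmx1 aQ.
have PP : P *m P = P.
  by rewrite /P mulmxBl !mulmxBr !mul1mx mulmx1 QQ subrr subr0.
have wP : w (adjmx P *m P) = 0 by rewrite aP PP /P (wB hw) w1 wQ subrr.
have hR X : w (X *m P) = 0.
  by have [h _] := kill hw pos wP (adjmx X); rewrite adjmxK in h.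
have hL X : w (P *m X) = 0.
  by have [_ h] := kill hw pos wP X; rewrite aP in h.
have QP : Q + P = 1%:M by rewrite /P addrC subrK.
rewrite -{1}(mulmx1 A) -QP mulmxDr (wD hw) hR addr0.
by rewrite -{1}(mul1mx (A *m Q)) -QP mulmxDl (wD hw) hL addr0 mulmxA.
Qed.

Section Generic.
Variables (n p : nat) (Cs : 'I_p -> functional C n -> Prop)
  (ext : 'I_p -> 'M[C]_n -> 'M[C]_n).
Hypothesis Hconv : forall i m (mu : 'I_m -> C) (nu : 'I_m -> functional C n),
  (forall k, 0 <= mu k) -> \sum_(k < m) mu k = 1 -> (forall k, Cs i (nu k)) ->
  Cs i (fun A => \sum_(k < m) mu k * nu k A).
Hypothesis Hext : forall i j v, Cs j v -> forall A,
  v (ext i A) = if i == j then v A else 0.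
Hypothesis H1 : forall i v, Cs i v -> v 1%:M = 1.

Lemma rep_ext I lam ws w : convex_rep Cs I lam ws w ->
  forall i A, w (ext i A) = if i \in I then lam i * ws i A else 0.
Proof.
move=> [HI [_ Hw]] i A; rewrite Hw.
have E j : j \in I -> lam j * ws j (ext i A) = if j == i then lam i * ws i A else 0.
  move=> jI; rewrite (Hext i (HI j jI).2) eq_sym.
  by case: eqP => [->|_]; rewrite ?mulr0.
rewrite (eq_bigr _ E).
case: (boolP (i \in I)) => iI.
  rewrite (bigD1 i iI) /= eqxx big1 ?addr0 // => j /andP[_ ji].
  by rewrite (negbTE ji).
apply: big1 => j jI; case: eqP => // ji; by rewrite -ji jI in iI.
Qed.

Lemma rep_uniq I lam ws I' lam' ws' w :
  convex_rep Cs I lam ws w -> convex_rep Cs I' lam' ws' w ->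
  I = I' /\ forall i, i \in I -> lam i = lam' i /\ forall A, ws i A = ws' i A.
Proof.
move=> r1 r2.
have E i A : (if i \in I then lam i * ws i A else 0) =
             (if i \in I' then lam' i * ws' i A else 0).
  by rewrite -(rep_ext r1) -(rep_ext r2).
have Hl i : i \in I -> i \in I' /\ lam i = lam' i.
  move=> iI; have := E i 1%:M; rewrite iI (H1 (r1.1 i iI).2) mulr1.
  case: ifP => iI'.
    by rewrite (H1 (r2.1 i iI').2) mulr1.
  by move=> l0; have := (r1.1 i iI).1; rewrite l0 ltxx.
have Hl' i : i \in I' -> i \in I.
  move=> iI'; have := E i 1%:M; rewrite iI' (H1 (r2.1 i iI').2) mulr1.
  case: ifP => // iI l0.
  by have := (r2.1 i iI').1; rewrite -l0 ltxx.
split.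
  by apply/setP => i; apply/idP/idP => [/Hl[]|/Hl'].
move=> i iI; have [iI' li] := Hl i iI; split => // A.
have := E i A; rewrite iI iI' -li; apply: mulfI.
by rewrite gt_eqF // (r1.1 i iI).1.
Qed.

Lemma rep_hull I lam ws w : convex_rep Cs I lam ws w -> conv_hull Cs w.
Proof.
move=> [HI [Hs Hw]].
case: (pickP (mem I)) => [j0 j0I|none]; last first.
  by move: Hs; rewrite big_pred0 // => /esym/eqP; rewrite oner_eq0.
exists p, (fun i => if i \in I then lam i else 0),
  (fun i => ws (if i \in I then i else j0)); split; [|split; [|split]].
- by move=> k; case: ifP => // kI; apply: ltW; exact: (HI k kI).1.
- by rewrite -big_mkcond.
- move=> k; exists (if k \in I then k else j0); case: ifP => kI.
    exact: (HI k kI).2.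
  exact: (HI j0 j0I).2.
- move=> A; rewrite Hw big_mkcond; apply: eq_bigr => i _.
  by case: ifP => _; rewrite ?mul0r.
Qed.

Lemma hull_rep w : conv_hull Cs w -> exists I lam ws, convex_rep Cs I lam ws w.
Proof.
move=> [m [mu [nu [mu0 [mu1 [Hnu Hw]]]]]].
pose idx k := proj1_sig (constructive_indefinite_description _ (Hnu k)).
have Hidx k : Cs (idx k) (nu k) := proj2_sig (constructive_indefinite_description _ (Hnu k)).
pose lam i := \sum_(k < m | idx k == i) mu k.
have lam0 i : 0 <= lam i by apply: sumr_ge0.
pose nu' i k := if idx k == i then nu k else
   (if [pick k | idx k == i] is Some k0 then nu k0 else nu k).
pose ws i := fun A => \sum_(k < m) ((lam i)^-1 * (if idx k == i then mu k else 0)) * nu' i k A.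
exists [set i | lam i != 0], lam, ws.
have sumF i (F : 'I_m -> C) : \sum_(k < m) (if idx k == i then F k else 0) =
    \sum_(k < m | idx k == i) F k by rewrite [RHS]big_mkcond.
have lamws i A : lam i != 0 -> lam i * ws i A = \sum_(k < m | idx k == i) mu k * nu k A.
  move=> li; rewrite /ws mulr_sumr -sumF; apply: eq_bigr => k _.
  rewrite /nu'; case: eqP => _; last by rewrite mulr0 mul0r mulr0.
  by rewrite mulrA mulrA mulfV // mul1r.
split; [|split].
- move=> i; rewrite inE => li; split; first by rewrite lt0r li lam0.
  apply: Hconv.
  + by move=> k; apply: mulr_ge0; [rewrite invr_ge0|case: ifP].
  + by rewrite -mulr_sumr sumF mulVf.
  + move=> k; rewrite /nu'; case: eqP => [<-|_]; first exact: Hidx.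
    case: pickP => [k0 /eqP <-|none]; first exact: Hidx.
    by move: li; rewrite /lam big_pred0 ?eqxx.
- rewrite -mu1 (partition_big idx xpredT) //= big_mkcond /=.
  apply: eq_bigr => i _; rewrite inE; case: eqP => [l0|] /=; last by [].
  exact: esym l0.
- move=> A; rewrite Hw (partition_big idx xpredT) //= [RHS]big_mkcond /=.
  apply: eq_bigr => i _; rewrite inE; case: eqP => l0 /=.
    rewrite big1 // => k ki; have := psumr_eq0P (fun k _ => mu0 k) l0 ki.
    by move->; rewrite mul0r.
  by rewrite lamws //; apply/eqP.
Qed.

Lemma dcs_generic : direct_convex_sum (conv_hull Cs) Cs.
Proof.
split; first by move=> I lam ws w; apply: rep_hull.
move=> w hw; split; first exact: hull_rep.
by move=> I lam ws I' lam' ws'; apply: rep_uniq.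
Qed.
End Generic.

Lemma col_mulmx m k l (A : 'M[C]_(m,k)) (B : 'M[C]_(k,l)) j :
  col j (A *m B) = A *m col j B.
Proof. by rewrite !colE mulmxA. Qed.

Lemma proj_colle n (Q M : 'M[C]_n) : is_orth_proj Q M -> forall j, ((col j Q)^T <= M)%MS.
Proof. by move=> [aQ [QQ H]] j; rewrite -H trmxK -col_mulmx QQ eqxx. Qed.

Lemma proj_fix n (Q M : 'M[C]_n) (x : 'rV[C]_n) : is_orth_proj Q M -> (x <= M)%MS ->
  Q *m x^T = x^T.
Proof. by move=> [_ [_ H]] xM; apply/eqP; rewrite H. Qed.

Lemma proj_comp n (Q Q' M : 'M[C]_n) : is_orth_proj Q M -> is_orth_proj Q' M -> Q *m Q' = Q'.
Proof.
move=> hQ hQ'; apply: cols_eq => j.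
by rewrite -{1}(trmxK (col j Q')) (proj_fix hQ) ?trmxK //; apply: proj_colle hQ' j.
Qed.

Lemma face_Q n (M Q : 'M[C]_n) v : face M v -> is_orth_proj Q M -> v Q = 1.
Proof.
move=> [sv [Q' [hQ' vQ']]] hQ; have [aQ' [QQ' _]] := hQ'.
by rewrite (state_proj sv aQ' QQ' vQ') -mulmxA (proj_comp hQ hQ') QQ'.
Qed.

Lemma face_ext n (M Q E A : 'M[C]_n) v : face M v -> is_orth_proj Q M ->
  v (adjmx E *m A *m E) = v (adjmx (E *m Q) *m A *m (E *m Q)).
Proof.
move=> fv hQ; have [aQ [QQ _]] := hQ; have vQ := face_Q fv hQ.
by rewrite (state_proj fv.1 aQ QQ vQ) adjmxM aQ !mulmxA.
Qed.

Lemma col0mx m k j : col j (0 : 'M[C]_(m,k)) = 0.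
Proof. by apply/matrixP => a b; rewrite !mxE. Qed.

Section Dir.
Variables (n p : nat) (Ls : 'I_p -> 'M[C]_n).
Hypothesis hd : mxdirect (\sum_(i < p) Ls i).
Definition Edir i := (proj_mx (Ls i) (\sum_(j | true && (j != i)) Ls j)%MS)^T.
Lemma Edir_Q i j Q : is_orth_proj Q (Ls j) -> Edir i *m Q = if i == j then Q else 0.
Proof.
move=> hQ; have hdi := (mxdirect_sumsP hd) i isT.
apply: cols_eq => k; rewrite /Edir -(trmxK (col k Q)) -trmx_mul.
have xM := proj_colle hQ k.
case: eqP => [e|ne].
  subst j; rewrite proj_mx_id //. apply/matrixP => a b; rewrite !mxE. done.
rewrite proj_mx_0 // ?trmx0 ?col0mx //.
by apply: (sumsmx_sup j) => //=; apply/eqP => e; apply: ne.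
Qed.
End Dir.

Lemma face_dcs n p (Ls : 'I_p -> 'M[C]_n) : mxdirect (\sum_(i < p) Ls i) ->
  direct_convex_sum (conv_hull (fun i => face (Ls i))) (fun i => face (Ls i)).
Proof.
move=> hd.
apply: (dcs_generic (ext := fun i A => adjmx (Edir Ls i) *m A *m Edir Ls i)).
- move=> i m; case: m => [|m] mu nu mu0 mu1 Hnu.
    by move: mu1; rewrite big_ord0 => /eqP; rewrite eq_sym oner_eq0.
  have [_ [Q [hQ _]]] := Hnu ord0.
  split; [split; [|split]|].
  + move=> a A B; rewrite mulr_sumr -big_split /=; apply: eq_bigr => k _.
    by rewrite (Hnu k).1.1 mulrDr mulrCA.
  + move=> B; apply: sumr_ge0 => k _; apply: mulr_ge0 => //.
    exact: (Hnu k).1.2.1.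
  + by rewrite -[RHS]mu1; apply: eq_bigr => k _; rewrite (Hnu k).1.2.2 mulr1.
  + exists Q; split => //; rewrite -[RHS]mu1; apply: eq_bigr => k _.
    by rewrite (face_Q (Hnu k) hQ) mulr1.
- move=> i j v fv A; have [[hl _] [Q [hQ _]]] := fv.
  rewrite (face_ext _ _ fv hQ) (Edir_Q hd i hQ); case: eqP => _.
    have [aQ [QQ _]] := hQ; rewrite aQ.
    by rewrite -(state_proj fv.1 aQ QQ (face_Q fv hQ)).
  by rewrite adjmx0 mul0mx mulmx0 (w0 hl).
- by move=> i v [[_ [_ h]] _].
Qed.

Section Pts.
Variables (n p : nat) (x : 'I_p -> 'rV[C]_n) (R : 'M[C]_(n, p)).
Hypothesis XR : (\matrix_(i < p) x i) *m R = 1%:M.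
Hypothesis hu : forall i, unit_vector (x i).
Definition Gm i : 'M[C]_n := (x i)^T *m (col i R)^T.
Definition PCs i (v : functional C n) := forall A, v A = vstate (x i) A.

Lemma xR i j : x j *m col i R = ((j == i)%:R)%:M.
Proof.
apply/matrixP => a b; rewrite !ord1.
have := congr1 (fun M : 'M[C]_p => M j i) XR; rewrite !mxE => <-.
by apply: eq_bigr => k _; rewrite !mxE.
Qed.

Lemma Gx i j : Gm i *m (x j)^T = ((j == i)%:R) *: (x i)^T.
Proof.
by rewrite /Gm -mulmxA -trmx_mul xR tr_scalar_mx mul_mx_scalar.
Qed.

Lemma vstate_ext (y : 'rV[C]_n) (G A : 'M[C]_n) :
  vstate y (adjmx G *m A *m G) = (adjmx (G *m y^T) *m A *m (G *m y^T)) 0 0.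
Proof.
have e : adjmx y^T = map_mx (@Num.conj C) y by rewrite /adjmx trmxK.
by rewrite /vstate adjmxM !mulmxA e.
Qed.

Lemma pts_ext i j v : PCs j v -> forall A,
  v (adjmx (Gm i) *m A *m Gm i) = if i == j then v A else 0.
Proof.
move=> hv A; rewrite !hv vstate_ext Gx.
case: (eqVneq i j) => [->|ne].
  by rewrite scale1r /vstate /adjmx trmxK.
by rewrite scale0r adjmx0 mul0mx mul0mx mxE.
Qed.

Lemma pts_dcs : direct_convex_sum (conv_hull PCs) PCs.
Proof.
apply: (dcs_generic (ext := fun i A => adjmx (Gm i) *m A *m Gm i)).
- move=> i m mu nu mu0 mu1 Hnu A.
  rewrite (eq_bigr (fun k => mu k * vstate (x i) A)); last by move=> k _; rewrite (Hnu k).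
  by rewrite -mulr_suml mu1 mul1r.
- exact: pts_ext.
- by move=> i v hv; rewrite hv /vstate mulmx1 (hu i).
Qed.

Lemma pts_indep (c : 'I_p -> C) :
  (forall A, \sum_(i < p) c i * vstate (x i) A = 0) -> forall i, c i = 0.
Proof.
move=> H i; have := H (adjmx (Gm i) *m 1%:M *m Gm i).
have h j : PCs j (vstate (x j)) by [].
rewrite (bigD1 i) //= big1 ?addr0; last first.
  by move=> j ji; rewrite (pts_ext i (h j)) eq_sym (negbTE ji) mulr0.
by rewrite (pts_ext i (h i)) eqxx /vstate mulmx1 (hu i) mulr1.
Qed.
End Pts.

Theorem mainTheorem1_aux :
  (forall (n p : nat) (L : 'M[C]_n) (Ls : 'I_p -> 'M[C]_n),
     (L == \sum_(i < p) Ls i)%MS ->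
     mxdirect (\sum_(i < p) Ls i) ->
     direct_convex_sum (conv_hull (fun i => face (Ls i)))
                       (fun i => face (Ls i))) /\
  (forall (n p : nat) (x : 'I_p -> 'rV[C]_n),
     row_free (\matrix_(i < p) x i) ->
     (forall i, unit_vector (x i)) ->
     (forall c : 'I_p -> C, (forall i, c i \is Num.real) ->
        (forall A, \sum_(i < p) c i * vstate (x i) A = 0) ->
        forall i, c i = 0) /\
     simplex (conv_hull (fun i w => forall A, w A = vstate (x i) A))).
Proof.
split.
  by move=> n p L Ls _ hd; apply: face_dcs.
move=> n p x hf hu; have [R XR] := row_freeP hf; split.
  by move=> c _ H; apply: (pts_indep XR hu).
by exists p, (fun i => vstate (x i)); apply: (pts_dcs XR hu).
Qed.
End S.

Theorem mainTheorem1 (C : numClosedFieldType) :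
  (forall (n p : nat) (L : 'M[C]_n) (Ls : 'I_p -> 'M[C]_n),
     (L == \sum_(i < p) Ls i)%MS ->
     mxdirect (\sum_(i < p) Ls i) ->
     direct_convex_sum (conv_hull (fun i => face (Ls i)))
                       (fun i => face (Ls i))) /\
  (forall (n p : nat) (x : 'I_p -> 'rV[C]_n),
     row_free (\matrix_(i < p) x i) ->
     (forall i, unit_vector (x i)) ->
     (forall c : 'I_p -> C, (forall i, c i \is Num.real) ->
        (forall A, \sum_(i < p) c i * vstate (x i) A = 0) ->
        forall i, c i = 0) /\
     simplex (conv_hull (fun i w => forall A, w A = vstate (x i) A))).
Proof. exact: mainTheorem1_aux. Qed.
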